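(* Let $q$ be a prime power with $q\equiv1\pmod4$, let $n=q+1$, $n'=n/2$, $\ell=(n-2)/4$, and $P=\{-\ell,\dots,-1,0,1,\dots,\ell\}\subseteq\mathbb{Z}_n$. Let $\theta\in\mathbb{F}_{q^2}$ be a primitive $n$-th root of unity (used to define $f_P$ and $C_P$). Then $P$ is $\mu_q$-invariant, and (i) $C_P\subseteq R_n$ is an iso-self-dual cyclic code, with $\varphi_{-1,n'}(C_P)=C_P^\perp$; (ii) $C_P$ is the alternant code obtained by restricting to $\mathbb{F}_q$ the generalized Reed–Solomon code $\{(a(1),\theta^{\ell}a(\theta^{-1}),\dots,\theta^{(n-1)\ell}a(\theta^{-(n-1)})) : a(X)\in\mathbb{F}_{q^2}[X],\ \deg a(X)<n'\}$ over $\mathbb{F}_{q^2}$, i.e. $C_P$ is the set of codewords of that code with all coordinates in $\mathbb{F}_q$; in particular $C_P$ is a $[q+1,\frac{q+1}{2},\frac{q+3}{2}]$ MDS code over $\mathbb{F}_q$.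
   Context: $\mathbb{Z}_n=\mathbb{Z}/n\mathbb{Z}$. $R_n=\mathbb{F}_q[X]/\langle X^n-1\rangle$, elements identified with representatives $a_0+\dots+a_{n-1}X^{n-1}$ and words $(a_0,\dots,a_{n-1})\in\mathbb{F}_q^n$; cyclic codes are ideals of $R_n$; $C^\perp$ is the Euclidean dual. $\mu_q:\mathbb{Z}_n\to\mathbb{Z}_n$, $i\mapsto qi\bmod n$; $P$ is $\mu_q$-invariant if $\mu_q(P)=P$. For $\mu_q$-invariant $P$, $f_P(X)=\prod_{i\in P}(X-\theta^i)\in\mathbb{F}_q[X]$ and $C_P$ is the ideal of $R_n$ generated by $(X^n-1)/f_P(X)$ (the cyclic code with check polynomial $f_P$). For $s\in\mathbb{Z}_n^*$, $t\in\mathbb{Z}_n$ with $qt\equiv t\pmod n$, $\varphi_{s,t}:R_n\to R_n$, $a(X)\mapsto a(\theta^{-t}X^{s^{-1}})\bmod(X^n-1)$ with $s^{-1}$ a positive integer, $ss^{-1}\equiv1\pmod n$. A cyclic code $C$ is iso-self-dual if $\varphi_{s,t}(C)=C^\perp$ for some such $s,t$. *)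

(* Defs.v *)
From HB Require Import structures.
From mathcomp Require Import all_boot all_order all_algebra all_field.
Set Implicit Arguments. Unset Strict Implicit. Unset Printing Implicit Defensive.
Import GRing.Theory.
Local Open Scope ring_scope.

(* Words of length n over R are row vectors 'rV[R]_n; the word (a_0,...,a_{n-1})
   is identified with the representative a_0 + ... + a_{n-1} X^{n-1} of R_n. *)
Definition wpoly (R : nzRingType) (n : nat) (c : 'rV[R]_n) : {poly R} :=
  \sum_(i < n) (c ord0 i)%:P * 'X^i.

Definition pword (R : nzRingType) (n : nat) (p : {poly R}) : 'rV[R]_n :=
  \row_(i < n) p`_i.

Definition muq_invariant (m q : nat) (P : {set 'I_m.+1}) : bool :=
  [set (inord ((q * i) %% m.+1)%N : 'I_m.+1) | i : 'I_m.+1 in P] == P.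

Definition fP (L : fieldType) (m : nat) (theta : L) (P : {set 'I_m.+1}) : {poly L} :=
  \prod_(i in P) ('X - (theta ^+ i)%:P).

(* C_P : the ideal of R_n = F[X]/<X^n-1> generated by (X^n-1)/f_P(X);
   F is embedded in L via iota, and computations are done in L[X]. *)
Definition CP (F : finFieldType) (L : fieldType) (iota : {rmorphism F -> L}) (m : nat) (theta : L)
    (P : {set 'I_m.+1}) : {set 'rV[F]_m.+1} :=
  let g := ('X^(m.+1) - 1) %/ fP theta P in
  [set c : 'rV[F]_m.+1 | [exists a : 'rV[F]_m.+1,
      wpoly (map_mx iota c) == (wpoly (map_mx iota a) * g) %% ('X^(m.+1) - 1)]].

Definition dual_code (F : finFieldType) (n : nat) (C : {set 'rV[F]_n}) : {set 'rV[F]_n} :=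
  [set x : 'rV[F]_n | [forall c in C, \sum_(i < n) x ord0 i * c ord0 i == 0]].

(* phi_{s,t} : a(X) |-> a(theta^{-t} X^{s^{-1}}) mod (X^n - 1), given s^{-1} = sinv *)
Definition phi_poly (L : fieldType) (n : nat) (theta : L) (sinv t : nat)
    (a : {poly L}) : {poly L} :=
  (a \Po ((theta ^- t)%:P * 'X^sinv)) %% ('X^n - 1).

Definition phi_image (F : finFieldType) (L : fieldType) (iota : {rmorphism F -> L}) (n : nat)
    (theta : L) (sinv t : nat) (C : {set 'rV[F]_n}) : {set 'rV[F]_n} :=
  [set y : 'rV[F]_n | [exists c in C,
      map_mx iota y == pword n (phi_poly n theta sinv t (wpoly (map_mx iota c)))]].

Definition iso_self_dual (F : finFieldType) (L : fieldType) (iota : {rmorphism F -> L}) (q n : nat)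
    (theta : L) (C : {set 'rV[F]_n}) : Prop :=
  exists s sinv t : nat,
    [/\ (s < n)%N, coprime s n, (s * sinv == 1 %[mod n])%N & (0 < sinv)%N] /\
    [/\ (t < n)%N, (q * t == t %[mod n])%N &
        phi_image iota theta sinv t C = dual_code C].

Definition wt (F : fieldType) (n : nat) (c : 'rV[F]_n) : nat :=
  #|[set i : 'I_n | c ord0 i != 0]|.

(* Main.v *)
Require Import Defs.
From HB Require Import structures.
From mathcomp Require Import all_boot all_order all_algebra all_field zify.
Set Implicit Arguments. Unset Strict Implicit. Unset Printing Implicit Defensive.
Import GRing.Theory.
Local Open Scope ring_scope.

Lemma modn_help (a k b d : nat) : a = (k * d + b)%N -> (b < d)%N -> (a %% d = b)%N.
Proof. by move=> -> hb; rewrite modnMDl modn_small. Qed.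

Lemma modn_2d (a d : nat) : (a < 2 * d)%N -> (a %% d = if a < d then a else a - d)%N.
Proof.
move=> h; case: ifP => h2; first by rewrite modn_small.
apply: (@modn_help _ 1); lia.
Qed.

Section Arith.
Variable q : nat.
Hypothesis hq : (q %% 4 = 1)%N.
Local Notation n := q.+1.
Local Notation n' := (q.+1 %/ 2)%N.
Local Notation l := ((q.+1 - 2) %/ 4)%N.

Lemma ql : q = (4 * l + 1)%N. Proof. lia. Qed.
Lemma n'l : n' = (2 * l + 1)%N. Proof. lia. Qed.

Definition inPn (k : nat) : bool := ((k %% n <= l) || (n - l <= k %% n))%N.

Lemma inPn_mod k : inPn (k %% n) = inPn k.
Proof. by rewrite /inPn modn_mod. Qed.

Lemma inPn_eqmod a b : (a = b %[mod n])%N -> inPn a = inPn b.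
Proof. by rewrite /inPn => ->. Qed.

Lemma qr_mod r : (0 < r < n)%N -> ((q * r) %% n = n - r)%N.
Proof. move=> /andP[h1 h2]; apply: (@modn_help _ (r - 1)); nia. Qed.

Lemma qq_mod a : (q * (q * a) = a %[mod n])%N.
Proof.
have h : ((q * q) %% n = 1)%N by apply: (@modn_help _ (q - 1)); [have := ql; nia | lia].
by rewrite mulnA -modnMml h mul1n.
Qed.

Lemma nq_mod a : (a + q * a = 0 %[mod n])%N.
Proof. by rewrite -{1}(mul1n a) -mulnDl add1n modnMr mod0n. Qed.

Lemma dvd_neg a b : (n %| a + b)%N = (b == q * a %[mod n])%N.
Proof.
by rewrite /dvdn -(eqn_modDl a) nq_mod mod0n.
Qed.

Lemma inPn_neg k : inPn (q * k) = inPn k.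
Proof.
rewrite -inPn_mod -modnMmr -[in RHS]inPn_mod.
have hk : (k %% n < n)%N by rewrite ltn_mod.
move: (k %% n)%N hk => r hr.
case: (posnP r) => [->|r0]; first by rewrite muln0.
by rewrite /inPn qr_mod ?r0 // !(@modn_small _ n) //; lia.
Qed.

Lemma inPn_shift k : inPn (k + n') = ~~ inPn k.
Proof.
rewrite -(@inPn_eqmod ((k %% n) + n')%N); last by rewrite modnDml.
rewrite -[in RHS]inPn_mod.
have hk : (k %% n < n)%N by rewrite ltn_mod.
move: (k %% n)%N hk => r hr.
have e := ql; have e2 := n'l.
rewrite /inPn modn_2d; last lia.
rewrite (modn_small hr).
case: ifP => h; lia.
Qed.

Lemma lshift i : (i < n)%N -> (((i + l) %% n < n') = inPn i)%N.
Proof.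
move=> hi; have e := ql; have e2 := n'l.
rewrite /inPn modn_2d; last lia.
rewrite (modn_small hi).
case: ifP => h; lia.
Qed.

End Arith.

Section Gen.
Variable R : nzRingType.
Variable m : nat.
Lemma wpoly_def (v : 'rV[R]_m.+1) : wpoly v = \poly_(i < m.+1) v ord0 (inord i).
Proof.
rewrite poly_def /wpoly; apply: eq_bigr => i _.
by rewrite mul_polyC inord_val.
Qed.
Lemma size_wpoly (v : 'rV[R]_m.+1) : (size (wpoly v) <= m.+1)%N.
Proof. by rewrite wpoly_def size_poly. Qed.
Lemma coef_wpoly (v : 'rV[R]_m.+1) i : (wpoly v)`_i = if (i < m.+1)%N then v ord0 (inord i) else 0.
Proof. by rewrite wpoly_def coef_poly. Qed.
Lemma wpoly_pword (p : {poly R}) : (size p <= m.+1)%N -> wpoly (pword m.+1 p) = p.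
Proof.
move=> hs; apply/polyP => i; rewrite coef_wpoly.
case: ifP => [hi|/negbT]; first by rewrite mxE inordK.
rewrite -leqNgt => hi.
by rewrite nth_default // (leq_trans hs).
Qed.
Lemma pword_wpoly (v : 'rV[R]_m.+1) : pword m.+1 (wpoly v) = v.
Proof.
apply/rowP => i; rewrite mxE coef_wpoly ltn_ord inord_val //.
Qed.
Lemma pword_inj (p1 p2 : {poly R}) : (size p1 <= m.+1)%N -> (size p2 <= m.+1)%N ->
  pword m.+1 p1 = pword m.+1 p2 -> p1 = p2.
Proof. by move=> h1 h2 e; rewrite -(wpoly_pword h1) -(wpoly_pword h2) e. Qed.
End Gen.

Lemma wpoly_map (R S : nzRingType) (f : {rmorphism R -> S}) m (v : 'rV[R]_m.+1) :
  wpoly (map_mx f v) = map_poly f (wpoly v).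
Proof.
apply/polyP => i; rewrite coef_map !coef_wpoly; case: ifP => _; rewrite ?mxE ?raddf0 //.
Qed.
Lemma pword_map (R S : nzRingType) (f : {rmorphism R -> S}) n (p : {poly R}) :
  pword n (map_poly f p) = map_mx f (pword n p).
Proof. by apply/rowP => i; rewrite !mxE coef_map. Qed.

Definition frobk (L : finFieldType) (k : nat) (x : L) : L := x ^+ ((sval (finPcharP L)) ^ k)%N.

Lemma frobk_pnat (L : finFieldType) k : [pchar L].-nat ((sval (finPcharP L)) ^ k)%N.
Proof.
case: (finPcharP L) => p pp pc /=.
rewrite pnatX; apply/orP; left; by rewrite pnatE.
Qed.

Lemma frobk_nmod (L : finFieldType) k : nmod_morphism (@frobk L k).
Proof.
split; first by rewrite /frobk expr0n expn_eq0; case: (finPcharP L) => p pp _ /=; case: p pp.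
by move=> x y; rewrite /frobk exprDn_pchar ?frobk_pnat.
Qed.

Lemma frobk_monoid (L : finFieldType) k : monoid_morphism (@frobk L k).
Proof. by split; [rewrite /frobk expr1n | move=> x y; rewrite /frobk exprMn]. Qed.

HB.instance Definition _ (L : finFieldType) k := GRing.isNmodMorphism.Build L L (@frobk L k) (frobk_nmod L k).
HB.instance Definition _ (L : finFieldType) k := GRing.isMonoidMorphism.Build L L (@frobk L k) (frobk_monoid L k).


Section Main.
Variables (F L : finFieldType) (iota : {rmorphism F -> L}) (q : nat) (theta : L).
Hypotheses (hF : #|F| = q) (hL : #|L| = (q ^ 2)%N) (hq : (q %% 4 = 1)%N)
  (htheta : q.+1.-primitive_root theta).
Local Notation n := q.+1.
Local Notation n' := (q.+1 %/ 2)%N.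
Local Notation l := ((q.+1 - 2) %/ 4)%N.

Lemma q_gt1 : (1 < q)%N.
Proof. by rewrite -hF finNzRing_gt1. Qed.

Lemma pcharq : {p | p \in [pchar L] & q = (p ^ logn p q)%N}.
Proof.
have [p pp pcF] := finPcharP F.
exists p; first exact: rmorph_pchar pcF.
have := card_pprimeChar pcF.
rewrite hF //.
Qed.

Lemma q_frob : q = ((sval (finPcharP L)) ^ logn (sval (finPcharP L)) q)%N.
Proof.
have [p pc e] := pcharq.
case: (finPcharP L) => p' pp' pc' /=.
have : p \in (p' : nat_pred) by rewrite -(pcharf_eq pc').
by rewrite inE => /eqP <-.
Qed.

Local Notation fr := (@frobk L (logn (sval (finPcharP L)) q)).

Lemma frE y : fr y = y ^+ q.
Proof. by rewrite /frobk -q_frob. Qed.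

Lemma natq0 : q%:R = 0 :> L.
Proof.
have [p pc e] := pcharq.
rewrite e natrX (pcharf0 pc) expr0n.
case: (logn p q) e => //= e; have := q_gt1; rewrite e expn0 //.
Qed.

Lemma natn1 : n%:R = 1 :> L.
Proof. by rewrite -addn1 natrD natq0 add0r. Qed.

Lemma frobD (x y : L) : (x + y) ^+ q = x ^+ q + y ^+ q.
Proof.
apply: exprDn_pchar.
have [p pc e] := pcharq.
rewrite e pnatX; apply/orP; left.
by rewrite pnatE ?(pcharf_prime pc).
Qed.

Lemma frobM (x y : L) : (x * y) ^+ q = x ^+ q * y ^+ q.
Proof. exact: exprMn. Qed.

Lemma frob_sum I (r : seq I) (P : pred I) (f : I -> L) :
  (\sum_(i <- r | P i) f i) ^+ q = \sum_(i <- r | P i) (f i) ^+ q.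
Proof.
elim/big_rec2: _ => [|i y1 y2 _ <-]; last by rewrite frobD.
by rewrite expr0n; case: q q_gt1.
Qed.

Lemma frob_iota x : iota x ^+ q = iota x.
Proof. by rewrite -rmorphXn -hF expf_card. Qed.

Lemma frob2 (y : L) : y ^+ q ^+ q = y.
Proof. by rewrite -exprM mulnn -hL expf_card. Qed.

Lemma size_XqX : size (('X^q - 'X : {poly L})) = q.+1.
Proof.
rewrite size_polyDl ?size_polyXn // size_polyN size_polyX ltnS; exact: q_gt1.
Qed.

Lemma frob_inF (y : L) : y ^+ q = y -> exists x, iota x = y.
Proof.
move=> hy.
pose S := [set z : L | z ^+ q == z].
pose I := [set iota x | x : F].
have IS : I \subset S by apply/subsetP => _ /imsetP[x _ ->]; rewrite inE frob_iota.
have cI : #|I| = q by rewrite card_imset ?cardT ?size_enum_ord -?cardT ?hF //; exact: fmorph_inj.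
have cS : (#|S| <= q)%N.
  rewrite -ltnS -size_XqX cardE.
  apply: max_poly_roots; first by rewrite -size_poly_eq0 size_XqX.
    by apply/allP => z; rewrite mem_enum inE rootE !hornerE subr_eq0.
  exact: enum_uniq.
have: y \in S by rewrite inE hy.
have /eqP <- : I == S by rewrite eqEcard IS cI cS.
by case/imsetP => x _ ->; exists x.
Qed.

Lemma th_n : theta ^+ n = 1. Proof. exact: prim_expr_order. Qed.
Lemma th_mod k : theta ^+ (k %% n) = theta ^+ k. Proof. exact: prim_expr_mod. Qed.
Lemma th_eq a b : (theta ^+ a == theta ^+ b) = (a == b %[mod n])%N.
Proof. exact: eq_prim_root_expr. Qed.
Lemma th_neq0 : theta != 0.
Proof. by rewrite (prim_root_eq0 htheta). Qed.
Lemma th_eqmod a b : (a = b %[mod n])%N -> theta ^+ a = theta ^+ b.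
Proof. by move=> h; apply/eqP; rewrite th_eq h. Qed.

Lemma th_inv k : theta ^- k = theta ^+ (q * k).
Proof.
have h : theta ^+ k * theta ^+ (q * k) = 1.
  by rewrite -exprD -{1}(mul1n k) -mulnDl add1n exprM th_n expr1n.
have u : theta ^+ k != 0 by rewrite expf_neq0 // th_neq0.
by rewrite -[RHS]mul1r -(mulVf u) -mulrA h mulr1.
Qed.

Lemma th_frob k : (theta ^+ k) ^+ q = theta ^+ (q * k).
Proof. by rewrite -exprM mulnC. Qed.

Lemma th_n' : theta ^+ n' = -1.
Proof.
have e := n'l hq.
have h : (theta ^+ n') ^+ 2 == 1.
  by rewrite -exprM (_ : (n' * 2 = n)%N) ?th_n //; have := ql hq; lia.
rewrite sqrf_eq1 in h; case/orP: h => /eqP // h.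
have : theta ^+ n' == theta ^+ 0 by rewrite h.
rewrite th_eq mod0n modn_small; last by have := ql hq; lia.
by rewrite e addn1.
Qed.

Lemma geo m : \sum_(i < n) (theta ^+ m) ^+ i = if (n %| m)%N then 1 else 0.
Proof.
case: ifP => hm.
  have -> : theta ^+ m = 1 by move: hm => /dvdnP [k ->]; rewrite mulnC exprM th_n expr1n.
  by rewrite (eq_bigr (fun _ => 1)) => [|i _]; rewrite ?expr1n // sumr_const card_ord natn1.
have hz : theta ^+ m - 1 != 0.
  rewrite subr_eq0 -(expr0 theta) th_eq mod0n.
  by rewrite /dvdn in hm; rewrite hm.
apply: (mulfI hz); rewrite -subrX1 mulr0 -exprM mulnC exprM th_n expr1n subrr //.
Qed.

Definition hat (v : 'rV[L]_n) (m : nat) : L := (wpoly v).[theta ^+ m].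

Lemma hat_sum v m : hat v m = \sum_(j < n) v ord0 j * (theta ^+ m) ^+ j.
Proof.
rewrite /hat /wpoly horner_sum; apply: eq_bigr => j _.
by rewrite hornerE hornerXn.
Qed.

Lemma hat_mod v m : hat v (m %% n) = hat v m.
Proof. by rewrite /hat th_mod. Qed.

Lemma hat_eqmod v a b : (a = b %[mod n])%N -> hat v a = hat v b.
Proof. by move=> h; rewrite /hat (th_eqmod h). Qed.

Lemma dvd_kj (k j : 'I_n) : (n %| k + q * j)%N = (k == j).
Proof.
rewrite addnC dvd_neg // -(eqn_modDl 0) !add0n qq_mod // !modn_small //.
Qed.

Lemma hat_inv (v : 'rV[L]_n) (j : 'I_n) : v ord0 j = \sum_(i < n) hat v i * (theta ^+ (q * j)) ^+ i.
Proof.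
transitivity (\sum_(i < n) \sum_(k < n) v ord0 k * (theta ^+ (k + q * j)) ^+ i); last first.
  apply: eq_bigr => i _; rewrite hat_sum mulr_suml; apply: eq_bigr => k _.
  rewrite -mulrA; congr (_ * _); rewrite -!exprM -exprD; congr (theta ^+ _); nia.
rewrite exchange_big /=.
rewrite (eq_bigr (fun k : 'I_n => v ord0 k * (k == j)%:R)); last first.
  by move=> k _; rewrite -mulr_sumr geo dvd_kj; case: (k == j).
rewrite (bigD1 j) //= eqxx mulr1 big1 ?addr0 // => k /negbTE ->.
by rewrite mulr0.
Qed.

Lemma hat_inj (v w : 'rV[L]_n) : (forall i, (i < n)%N -> hat v i = hat w i) -> v = w.
Proof.
move=> h; apply/rowP => j; rewrite !hat_inv; apply: eq_bigr => i _.
by rewrite h.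
Qed.

Local Notation PP := [set i : 'I_n | ((i <= l) || (n - l <= i))%N].

Lemma inPP (i : 'I_n) : (i \in PP) = inPn q i.
Proof. by rewrite inE /inPn modn_small. Qed.

Definition negI (i : 'I_n) : 'I_n := inord ((q * i) %% n).
Lemma negI_val i : (negI i : nat) = ((q * i) %% n)%N.
Proof. by rewrite /negI inordK // ltn_mod. Qed.
Lemma negIK : involutive negI.
Proof.
move=> i; apply: val_inj; rewrite /= !negI_val modnMmr qq_mod // modn_small //.
Qed.
Lemma negI_P i : (negI i \in PP) = (i \in PP).
Proof. by rewrite !inPP negI_val inPn_mod inPn_neg. Qed.
Lemma th_negI (i : 'I_n) : theta ^+ (negI i) = theta ^+ (q * i).
Proof. by rewrite negI_val th_mod. Qed.

Definition shI (i : 'I_n) : 'I_n := inord ((i + n') %% n).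
Lemma shI_val i : (shI i : nat) = ((i + n') %% n)%N.
Proof. by rewrite /shI inordK // ltn_mod. Qed.
Lemma shI_inj : injective shI.
Proof.
move=> i j /(congr1 val); rewrite /= !shI_val => /eqP; rewrite eqn_modDr !modn_small //.
by move/eqP/val_inj.
Qed.
Lemma shI_P i : (shI i \in PP) = (i \notin PP).
Proof. by rewrite !inPP shI_val inPn_mod inPn_shift. Qed.

Lemma card_nP : #|~: PP| = n'.
Proof.
have h1 : (#|PP| <= #|~: PP|)%N.
  rewrite -(card_imset _ shI_inj); apply: subset_leq_card; apply/subsetP => _ /imsetP[i hi ->].
  by rewrite inE shI_P hi.
have h2 : (#|~: PP| <= #|PP|)%N.
  rewrite -(card_imset _ shI_inj); apply: subset_leq_card; apply/subsetP => _ /imsetP[i hi ->].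
  by rewrite shI_P -in_setC.
have := cardsC PP; rewrite card_ord.
have := ql hq; have := n'l hq; lia.
Qed.

Lemma card_P : #|PP| = n'.
Proof. have := cardsC PP; rewrite card_ord card_nP; have := ql hq; have := n'l hq; lia. Qed.

Local Notation gL := (('X^n - 1) %/ fP theta PP).

Lemma fP_neq0 : fP theta PP != 0.
Proof. exact: monic_neq0 (monic_prod_XsubC _ _ _). Qed.

Lemma gL_prod : gL = \prod_(i in ~: PP) ('X - (theta ^+ i)%:P).
Proof.
rewrite -(factor_Xn_sub_1 htheta) big_mkord (bigID (fun i => i \in PP)) /=.
rewrite mulKp ?fP_neq0 //; apply: eq_bigl => i; by rewrite in_setC.
Qed.

Lemma gL_root (i : 'I_n) : i \notin PP -> gL.[theta ^+ i] = 0.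
Proof.
move=> hi; rewrite gL_prod horner_prod (bigD1 i) ?in_setC //=.
by rewrite hornerXsubC subrr mul0r.
Qed.

Lemma size_gL : size gL = n'.+1.
Proof. by rewrite gL_prod -big_enum size_prod_XsubC -cardE card_nP. Qed.

Lemma gL_frob : map_poly fr gL = gL.
Proof.
rewrite gL_prod rmorph_prod.
rewrite (eq_bigr (fun i => 'X - (theta ^+ (negI i))%:P)); last first.
  by move=> i _; rewrite rmorphB /= map_polyX map_polyC /= frE th_frob th_negI.
rewrite (reindex_inj (inv_inj negIK)) /=.
apply: eq_big => i; first by rewrite !in_setC negI_P.
by rewrite negIK.
Qed.

Lemma gL_coef k : (gL`_k) ^+ q = gL`_k.
Proof. by rewrite -frE -coef_map gL_frob. Qed.

Definition pre (y : L) : F := odflt 0 [pick x | iota x == y].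
Lemma pre_iota y : y ^+ q = y -> iota (pre y) = y.
Proof.
move=> /frob_inF [x hx]; rewrite /pre; case: pickP => [z /eqP //|/(_ x)].
by rewrite hx eqxx.
Qed.

Definition gF : {poly F} := \poly_(k < size gL) pre gL`_k.
Lemma gF_map : map_poly iota gF = gL.
Proof.
apply/polyP => k; rewrite coef_map coef_poly; case: ifP => hk.
  by apply: pre_iota; apply: gL_coef.
by rewrite raddf0 nth_default // leqNgt hk.
Qed.
Lemma size_gF : size gF = n'.+1.
Proof. by rewrite -size_gL -gF_map size_map_poly. Qed.
Lemma gF_neq0 : gF != 0.
Proof. by rewrite -size_poly_eq0 size_gF. Qed.

Local Notation CC := (CP iota theta PP).
Local Notation Mn := ('X^n - 1 : {poly L}).
Local Notation n'' := (2 * l).+1.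

Lemma n''E : n'' = n'. Proof. by have := n'l hq; lia. Qed.

Lemma size_Mn : size Mn = n.+1.
Proof. exact: size_XnsubC. Qed.

Lemma modM_eval (p : {poly L}) (i : nat) : (p %% Mn).[theta ^+ i] = p.[theta ^+ i].
Proof.
rewrite [in RHS](divp_eq p Mn) hornerD hornerM.
by rewrite !hornerE -exprM mulnC exprM th_n expr1n subrr mulr0 add0r.
Qed.

Lemma A1 c : c \in CC -> forall i : 'I_n, i \notin PP -> hat (map_mx iota c) i = 0.
Proof.
rewrite inE => /existsP [a /eqP e] i hi.
by rewrite /hat e modM_eval hornerM gL_root ?mulr0.
Qed.

Lemma A2 c : (forall i : 'I_n, i \notin PP -> hat (map_mx iota c) i = 0) ->
  exists b : 'rV[F]_n'', c = pword n (wpoly b * gF).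
Proof.
move=> h.
have [r hr] : exists r, map_poly iota (wpoly c) = r * gL.
  have := @uniq_roots_prod_XsubC _ (map_poly iota (wpoly c)) [seq theta ^+ (nat_of_ord i) | i : 'I_n <- enum (~: PP)].
  case.
  - apply/allP => z /mapP [i hi ->]; rewrite mem_enum in hi.
    by rewrite /root -wpoly_map; apply/eqP; apply: h; rewrite -in_setC.
  - rewrite uniq_rootsE map_inj_in_uniq ?enum_uniq // => i j _ _ /eqP.
    by rewrite th_eq !modn_small // => /eqP /val_inj.
  move=> r ->; exists r; by rewrite big_map big_enum /= gL_prod.
pose hh := wpoly c %/ gF.
have mh : map_poly iota hh = r by rewrite map_divp gF_map hr mulpK // -size_poly_eq0 size_gL.
have e : hh * gF = wpoly c.
  by apply: (@map_poly_inj _ _ iota); rewrite rmorphM /= mh gF_map hr.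
have sh : (size hh <= n'')%N.
  rewrite size_divp ?gF_neq0 // size_gF /= n''E.
  apply: leq_trans (leq_sub2r _ (size_wpoly c)) _; have := ql hq; have := n'l hq; lia.
exists (pword n'' hh); rewrite wpoly_pword // e pword_wpoly //.
Qed.

Lemma size_bg (b : 'rV[F]_n'') : (size ((wpoly b * gF)%R) <= n)%N.
Proof.
apply: leq_trans (size_mul_leq _ _) _; rewrite size_gF.
have := size_wpoly b; have := ql hq; have := n'l hq; lia.
Qed.

Lemma A3 (b : 'rV[F]_n'') : pword n (wpoly b * gF) \in CC.
Proof.
rewrite inE; apply/existsP; exists (pword n (wpoly b)).
rewrite -!pword_map !wpoly_pword ?size_map_poly ?size_bg //; last first.
  by apply: leq_trans (size_wpoly b) _; have := ql hq; have := n'l hq; lia.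
rewrite rmorphM /= gF_map modp_small // size_Mn ltnS.
by rewrite -gF_map -rmorphM size_map_poly size_bg.
Qed.

Lemma C_char c : c \in CC <-> forall i : 'I_n, i \notin PP -> hat (map_mx iota c) i = 0.
Proof.
split; first exact: A1.
by move=> /A2 [b ->]; apply: A3.
Qed.

Definition wa (a : {poly L}) : 'rV[L]_n := \row_(j < n) (theta ^+ (j * l) * a.[theta ^- j]).

Lemma dvd_ik i (k : 'I_n) : (n %| q * k + (i + l))%N = (k == ((i + l) %% n)%N :> nat).
Proof.
by rewrite dvd_neg // qq_mod // (modn_small (ltn_ord k)) eq_sym.
Qed.

Lemma hat_w (a : {poly L}) i : (size a <= n')%N -> hat (wa a) i = a`_((i + l) %% n).
Proof.
move=> sa.
have sa' : (size a <= n)%N by apply: leq_trans sa _; have := ql hq; have := n'l hq; lia.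
rewrite hat_sum.
transitivity (\sum_(j < n) \sum_(k < n) a`_k * (theta ^+ (q * k + (i + l))) ^+ j).
  apply: eq_bigr => j _; rewrite mxE (horner_coef_wide _ sa') !mulr_sumr mulr_suml.
  apply: eq_bigr => k _; rewrite th_inv.
  rewrite mulrCA -mulrA; congr (_ * _).
  rewrite -!exprM -!exprD; congr (theta ^+ _); nia.
rewrite exchange_big /=.
rewrite (eq_bigr (fun k : 'I_n => a`_k * (k == ((i + l) %% n)%N :> nat)%:R)); last first.
  by move=> k _; rewrite -mulr_sumr geo dvd_ik; case: (_ == _).
rewrite (bigD1 (Ordinal (ltn_mod (i + l) n))) //= eqxx mulr1 big1 ?addr0 // => k.
move=> hk; suff /negbTE -> : (k : nat) != ((i + l) %% n)%N by rewrite mulr0.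
by apply: contra hk => /eqP e; apply/eqP/val_inj.
Qed.

Lemma n'_le_n : (n' <= n)%N. Proof. by have := ql hq; have := n'l hq; lia. Qed.

Lemma alt1 c : c \in CC -> exists a : {poly L}, (size a <= n')%N /\
  forall j : 'I_n, iota (c ord0 j) = theta ^+ (j * l) * a.[theta ^- j].
Proof.
move=> hc.
pose a := \poly_(k < n') hat (map_mx iota c) (k + q * l)%N.
have sa : (size a <= n')%N by apply: size_poly.
exists a; split => // j.
suff e : map_mx iota c = wa a by have := congr1 (fun M : 'rV[L]_n => M ord0 j) e; rewrite !mxE.
apply: hat_inj => i hi; rewrite hat_w // coef_poly lshift //.
case: ifP => hP.
  by apply: hat_eqmod; rewrite modnDml -addnA -modnDmr nq_mod // mod0n addn0.
have hi2 : Ordinal hi \notin PP by rewrite inPP /= hP.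
exact: (A1 hc hi2).
Qed.

Lemma alt2 (c : 'rV[F]_n) (a : {poly L}) : (size a <= n')%N ->
  (forall j : 'I_n, iota (c ord0 j) = theta ^+ (j * l) * a.[theta ^- j]) -> c \in CC.
Proof.
move=> sa h.
have e : map_mx iota c = wa a by apply/rowP => j; rewrite !mxE h.
apply/C_char => i hi; rewrite e hat_w // nth_default //.
by apply: leq_trans sa _; rewrite leqNgt lshift // -inPP.
Qed.

Lemma hat_frob (x : 'rV[F]_n) m : (hat (map_mx iota x) m) ^+ q = hat (map_mx iota x) (q * m).
Proof.
rewrite !hat_sum frob_sum; apply: eq_bigr => j _.
by rewrite frobM mxE frob_iota exprAC th_frob.
Qed.

Lemma B1 (x : 'rV[F]_n) : (forall i : 'I_n, i \in PP -> hat (map_mx iota x) i = 0) ->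
  x \in dual_code CC.
Proof.
move=> hx; rewrite inE; apply/forall_inP => c hc; apply/eqP.
apply: (fmorph_inj iota); rewrite rmorph_sum rmorph0.
transitivity (\sum_(i < n) hat (map_mx iota c) i * hat (map_mx iota x) (q * i)).
  transitivity (\sum_(j < n) \sum_(i < n) hat (map_mx iota c) i * ((map_mx iota x) ord0 j * (theta ^+ (q * i)) ^+ j)).
    apply: eq_bigr => j _.
    have e : iota (c ord0 j) = (map_mx iota c) ord0 j by rewrite mxE.
    rewrite rmorphM /= e (hat_inv (map_mx iota c) j) mulr_sumr.
    apply: eq_bigr => i _; rewrite mxE mulrCA; congr (_ * (_ * _)).
    by rewrite -!exprM -!mulnA (mulnC j).
  rewrite exchange_big /=; apply: eq_bigr => i _; by rewrite [hat (map_mx iota x) _]hat_sum mulr_sumr.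
apply: big1 => i _.
case: (boolP (i \in PP)) => hi.
  rewrite -(hat_mod (map_mx iota x) (q * i)) -negI_val hx ?mulr0 //; by rewrite negI_P.
by rewrite (A1 hc hi) mul0r.
Qed.

Lemma tr_nz : exists z : L, z + z ^+ q != 0.
Proof.
apply/existsP; apply: contraT; rewrite negb_exists => /forallP hz.
have h1 : size ('X^q + 'X : {poly L}) = q.+1.
  rewrite size_polyDl ?size_polyXn // size_polyX ltnS; exact: q_gt1.
have := @max_poly_roots _ ('X^q + 'X) (enum L).
rewrite -size_poly_eq0 h1 enum_uniq -cardE hL /= ltnS.
have -> : all (root ('X^q + 'X)) (enum L).
  apply/allP => z _; rewrite rootE !hornerE addrC.
  by have := hz z; rewrite negbK.
move=> /(_ isT isT isT); rewrite -mulnn; have := q_gt1; nia.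
Qed.

Lemma hat_geo (v : 'rV[L]_n) (b g : L) m m' :
  (forall j : 'I_n, v ord0 j = b * (theta ^+ m) ^+ j + g * (theta ^+ m') ^+ j) ->
  forall i, hat v i = b * (n %| m + i)%N%:R + g * (n %| m' + i)%N%:R.
Proof.
move=> hv i; rewrite hat_sum.
rewrite (eq_bigr (fun j : 'I_n => b * (theta ^+ (m + i)) ^+ j + g * (theta ^+ (m' + i)) ^+ j)).
  by rewrite big_split /= -!mulr_sumr !geo; case: (_ %| _)%N; case: (_ %| _)%N.
move=> j _; rewrite hv mulrDl -!mulrA -!exprMn -!exprD //.
Qed.

Lemma dot_geo (x : 'rV[F]_n) (b g : L) m m' (t : 'I_n -> L) :
  (forall j : 'I_n, t j = b * (theta ^+ m) ^+ j + g * (theta ^+ m') ^+ j) ->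
  \sum_(j < n) iota (x ord0 j) * t j = b * hat (map_mx iota x) m + g * hat (map_mx iota x) m'.
Proof.
move=> ht; rewrite !hat_sum !mulr_sumr -big_split /=; apply: eq_bigr => j _.
by rewrite ht mxE mulrDr !mulrA ![iota _ * _]mulrC.
Qed.

Lemma th_jq m j : ((theta ^+ m) ^+ j) ^+ q = (theta ^+ (q * m)) ^+ j.
Proof. by rewrite exprAC th_frob. Qed.

Lemma B2 (x : 'rV[F]_n) : x \in dual_code CC ->
  forall m : 'I_n, m \in PP -> hat (map_mx iota x) m = 0.
Proof.
move=> hx m hm.
set y := hat (map_mx iota x) m.
have key : forall b : L, b * y + (b * y) ^+ q = 0.
  move=> b.
  pose t (j : 'I_n) : L := b * (theta ^+ m) ^+ j + b ^+ q * (theta ^+ (q * m)) ^+ j.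
  have tq : forall j, (t j) ^+ q = t j.
    move=> j; rewrite /t frobD !frobM frob2 !th_jq.
    rewrite (@th_eqmod (q * (q * m)) m) ?qq_mod // addrC //.
  pose w : 'rV[F]_n := \row_j pre (t j).
  have hw : forall j, iota (w ord0 j) = t j by move=> j; rewrite mxE pre_iota.
  have wC : w \in CC.
    apply/C_char => i hi.
    rewrite (@hat_geo _ b (b ^+ q) m (q * m)); last by move=> j; rewrite mxE hw.
    have -> : (n %| m + i)%N = false.
      apply: negbTE; apply: contra hi; rewrite dvd_neg // => /eqP e.
      by rewrite !inPP in hm *; rewrite -inPn_mod e inPn_mod inPn_neg.
    have -> : (n %| q * m + i)%N = false.
      apply: negbTE; apply: contra hi; rewrite dvd_neg // qq_mod // => /eqP e.
      by rewrite !inPP in hm *; rewrite -inPn_mod e inPn_mod.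
    by rewrite !mulr0 addr0.
  have := hx; rewrite inE => /forall_inP /(_ w wC) /eqP h0.
  have := congr1 iota h0; rewrite rmorph_sum rmorph0.
  rewrite (eq_bigr (fun j : 'I_n => iota (x ord0 j) * t j)); last first.
    by move=> j _; rewrite rmorphM hw.
  rewrite (@dot_geo x b (b ^+ q) m (q * m)) // -hat_frob -/y -frobM //.
have [-> //|ny] := eqVneq y 0.
have [z hz] := tr_nz.
have := key (z / y); rewrite divfK // => e.
by move: hz; rewrite e eqxx.
Qed.

Lemma B_char x : x \in dual_code CC <-> forall m : 'I_n, m \in PP -> hat (map_mx iota x) m = 0.
Proof. split; [exact: B2 | exact: B1]. Qed.

Definition phiF (p : {poly F}) : {poly F} := (p \Po (- 'X^q)) %% ('X^n - 1).

Lemma th_n'inv : theta ^- n' = -1.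
Proof. by rewrite th_n' invrN1. Qed.

Lemma phi_map (c : 'rV[F]_n) :
  phi_poly n theta q n' (wpoly (map_mx iota c)) = map_poly iota (phiF (wpoly c)).
Proof.
rewrite /phi_poly /phiF th_n'inv polyCN polyC1 mulN1r map_modp map_comp_poly wpoly_map.
congr ((_ \Po _) %% _).
  apply/polyP => k; rewrite coef_map /= !(coefN, coefXn, coefB, coef1).
  case: (k == q); rewrite /= ?mulr1n ?mulr0n ?oppr0 ?raddf0 // raddfN. congr (- _); exact: (esym (rmorph1 iota)).
apply/polyP => k; rewrite coef_map /= !(coefN, coefXn, coefB, coef1).
rewrite raddfB /=; congr (_ - _); case: (_ == _); rewrite /= ?mulr1n ?mulr0n ?raddf0 //; exact: (esym (rmorph1 iota)).
Qed.

Lemma hat_phi (v : 'rV[L]_n) i :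
  hat (pword n (phi_poly n theta q n' (wpoly v))) i = hat v (q * (n' + i))%N.
Proof.
rewrite /hat wpoly_pword; last first.
  by rewrite -ltnS -size_Mn ltn_modp -size_poly_eq0 size_Mn.
rewrite /phi_poly modM_eval horner_comp !hornerE th_inv th_frob -exprD mulnDr //.
Qed.

Lemma mod_phi2 i : (i = q * (n' + q * (n' + i)) %[mod n])%N.
Proof.
rewrite mulnDr -modnDmr qq_mod // modnDmr addnA [(q * n' + n')%N]addnC.
by rewrite -modnDml nq_mod // modnDml add0n.
Qed.

Lemma phi_dual : phi_image iota theta q n' CC = dual_code CC.
Proof.
apply/setP => y; rewrite [in LHS]inE; apply/idP/idP.
  case/exists_inP => c hc /eqP e.
  apply/B_char => m hm; rewrite e hat_phi -hat_mod.
  have hk : Ordinal (ltn_mod (q * (n' + m))%N n) \notin PP.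
    by rewrite inPP /= inPn_mod (inPn_neg hq) addnC (inPn_shift hq) -inPP hm.
  exact: (A1 hc hk).
move=> hy; apply/exists_inP.
pose c := pword n (phiF (wpoly y)).
have ec : map_mx iota c = pword n (phi_poly n theta q n' (wpoly (map_mx iota y))).
  by rewrite phi_map pword_map.
exists c.
  apply/C_char => i hi; rewrite ec hat_phi -hat_mod.
  have hk : Ordinal (ltn_mod (q * (n' + i))%N n) \in PP.
    by rewrite inPP /= inPn_mod (inPn_neg hq) addnC (inPn_shift hq) -inPP hi.
  exact: (B2 hy hk).
apply/eqP/hat_inj => i _; rewrite hat_phi ec hat_phi.
exact: hat_eqmod (mod_phi2 i).
Qed.

Definition encF (b : 'rV[F]_n'') : 'rV[F]_n := pword n (wpoly b * gF).

Lemma encF_inj : injective encF.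
Proof.
move=> b1 b2 /pword_inj e.
have := e (size_bg b1) (size_bg b2) => /(mulIf gF_neq0) e2.
by rewrite -(pword_wpoly b1) -(pword_wpoly b2) e2.
Qed.

Lemma CC_img : CC = encF @: setT.
Proof.
apply/setP => c; apply/idP/imsetP.
  by move=> /C_char /A2 [b ->]; exists b.
by case=> b _ ->; apply: A3.
Qed.

Lemma card_CC : #|CC| = (q ^ n')%N.
Proof.
by rewrite CC_img card_imset ?cardsT ?card_mx ?hF ?mul1n ?n''E //; exact: encF_inj.
Qed.

Lemma wt_lb (c : 'rV[F]_n) : c \in CC -> c != 0 -> (n'.+1 <= wt c)%N.
Proof.
move=> hc nc.
have [a [sa ha]] := alt1 hc.
have a0 : a != 0.
  apply: contra nc => /eqP a0; apply/eqP/rowP => j.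
  by apply: (fmorph_inj iota); rewrite ha a0 horner0 mulr0 !mxE rmorph0.
pose Z := [set j : 'I_n | c ord0 j == 0].
have hw : wt c = #|~: Z|.
  by rewrite /wt; apply: eq_card => j; rewrite !inE.
have cZ : (#|Z| < n')%N.
  apply: leq_trans sa.
  have := @max_poly_roots _ a [seq theta ^- (nat_of_ord j) | j : 'I_n <- enum Z] a0.
  rewrite size_map -cardE; apply.
    apply/allP => z /mapP [j hj ->]; rewrite mem_enum inE in hj.
    have := ha j; rewrite (eqP hj) rmorph0 => /esym /eqP.
    have := ha j; rewrite (eqP hj) raddf0 => /esym/eqP.
    by rewrite mulf_eq0 expf_eq0 (negbTE th_neq0) andbF.
  rewrite map_inj_in_uniq ?enum_uniq // => i j _ _ /invr_inj /eqP.
  by rewrite (eq_prim_root_expr htheta) !modn_small // => /eqP /val_inj.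
have := cardsC Z; rewrite card_ord hw; move: cZ; move: (#|Z|) (#|~: Z|) => x y.
have := ql hq; have := n'l hq; lia.
Qed.

Lemma wt_ex : exists2 c, c \in CC & c != 0 /\ wt c = n'.+1.
Proof.
have e1 : wpoly (pword n'' (1 : {poly F})) = 1 by rewrite wpoly_pword // size_poly1.
have hc := A3 (pword n'' 1); rewrite e1 mul1r in hc.
have hn : (n' < n)%N by have := ql hq; have := n'l hq; lia.
have nc : pword n gF != 0.
  apply/eqP => /rowP /(_ (Ordinal hn)); rewrite !mxE /=.
  have -> : n' = (size gF).-1 by rewrite size_gF.
  by move/eqP; rewrite -lead_coefE lead_coef_eq0 (negbTE gF_neq0).
exists (pword n gF) => //; split => //.
apply/eqP; rewrite eqn_leq wt_lb // andbT.
have hk : (n'.+1 <= n)%N by [].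
have -> : wt (pword n gF) = #|[set i : 'I_n | pword n gF ord0 i != 0]| by [].
apply: leq_trans (_ : #|[set widen_ord hk j | j : 'I_n'.+1]| <= _)%N; last first.
  by apply: leq_trans (leq_imset_card _ _) _; rewrite card_ord.
apply: subset_leq_card; apply/subsetP => i; rewrite inE mxE => hi.
apply/imsetP; have hi' : (i < n'.+1)%N.
  rewrite ltnNge; apply: contra hi => hle.
  by rewrite nth_default // size_gF.
by exists (Ordinal hi') => //; apply: val_inj.
Qed.

Lemma main_all :
  muq_invariant q PP
  /\ (iso_self_dual iota q theta CC /\ phi_image iota theta (n - 1) n' CC = dual_code CC)
  /\ ((forall c : 'rV[F]_n, c \in CC <->
         exists a : {poly L}, (size a <= n')%N /\
           forall j : 'I_n, iota (c ord0 j) = theta ^+ (j * l) * a.[theta ^- j])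
      /\ #|CC| = (q ^ ((q + 1) %/ 2))%N
      /\ (exists2 c, c \in CC & c != 0 /\ wt c = ((q + 3) %/ 2)%N)
      /\ (forall c, c \in CC -> c != 0 -> ((q + 3) %/ 2 <= wt c)%N)).
Proof.
have e3 : ((q + 3) %/ 2)%N = n'.+1 by have := ql hq; have := n'l hq; lia.
have e1 : ((q + 1) %/ 2)%N = n' by rewrite addn1.
have en : (n - 1)%N = q by rewrite subn1.
split.
  apply/eqP/setP => j; apply/imsetP/idP.
    by case=> i hi ->; rewrite -[inord _]/(negI i) negI_P.
  move=> hj; exists (negI j); first by rewrite negI_P.
  by rewrite -[inord _]/(negI (negI j)) negIK.
split.
  rewrite en; split; last exact: phi_dual.
  exists q, q, n'; split; split => //.
  - exact: coprimenS.
  - by have := qq_mod hq 1; rewrite !muln1 => ->.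
  - exact: ltnW q_gt1.
  - have := ql hq; have := n'l hq; lia.
  - apply/eqP; rewrite [in RHS]modn_small; last by have := ql hq; have := n'l hq; lia.
    apply: (@modn_help _ (2 * l)).
      rewrite [in RHS](n'l hq) [in LHS](n'l hq).
      move: (ql hq); set L0 := ((q.+1 - 2) %/ 4)%N; move: L0 => L0 e.
      rewrite [in LHS]e [in RHS]e; nia.
    have := ql hq; have := n'l hq; lia.
  - exact: phi_dual.
split.
  move=> c; split; first exact: alt1.
  by case=> a [sa ha]; apply: alt2 sa ha.
rewrite e1 e3; split; first exact: card_CC.
split; first exact: wt_ex.
exact: wt_lb.
Qed.

End Main.

Theorem theorem4p8 (F L : finFieldType) (iota : {rmorphism F -> L}) (q : nat)
    (theta : L)
    (hF : #|F| = q) (hL : #|L| = (q ^ 2)%N) (hq : (q %% 4 = 1)%N)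
    (htheta : q.+1.-primitive_root theta) :
  let n := q.+1 in
  let n' := (n %/ 2)%N in
  let l := ((n - 2) %/ 4)%N in
  let P := [set i : 'I_q.+1 | ((i <= l) || (n - l <= i))%N] in
  let C := CP iota theta P in
  muq_invariant q P
  (* (i) *)
  /\ (iso_self_dual iota q theta C /\ phi_image iota theta (n - 1) n' C = dual_code C)
  (* (ii) *)
  /\ ((forall c : 'rV[F]_n, c \in C <->
         exists a : {poly L}, (size a <= n')%N /\
           forall j : 'I_n, iota (c ord0 j) = theta ^+ (j * l) * a.[theta ^- j])
      /\ #|C| = (q ^ ((q + 1) %/ 2))%N
      /\ (exists2 c, c \in C & c != 0 /\ wt c = ((q + 3) %/ 2)%N)
      /\ (forall c, c \in C -> c != 0 -> ((q + 3) %/ 2 <= wt c)%N)).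
Proof.
exact: (main_all iota hF hL hq htheta).
Qed.
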